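(* Let $0<q<1$ and define monic polynomials by $p_{-1}=0$, $p_0=1$, $p_{n+1}(x)=(x-b_n)p_n(x)-\lambda_np_{n-1}(x)$ with $$b_n=q^{n+1}[n+1]_q+q^{n-1}[n]_q,\qquad \lambda_n=q^{2n-1}[n]_q^2.$$ Let $\mu$ be the discrete probability measure on $\mathbb R$ with mass $q^{i}(q;q)_\infty/(q;q)_{i-1}$ at the point $q^{i-1}/(1-q)$ for each $i\ge1$, and mass $1-q$ at $0$. Then the $p_n$ are orthogonal with respect to $\mu$ (i.e. $\int p_mp_n\,d\mu=0$ for $m\ne n$), and the moments of $\mu$ are $\mu_0=1$ and $\mu_n=\int x^n\,d\mu=q\,[n]_q!$ for $n\ge1$.
   Context: $[n]_q=\frac{1-q^n}{1-q}$, $[n]_q!=[n]_q\cdots[1]_q$, $(q;q)_k=\prod_{j=1}^{k}(1-q^j)$ (with $(q;q)_0=1$) and $(q;q)_\infty=\prod_{j\ge1}(1-q^j)$. *)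

(* Defs.v *)
From mathcomp Require Import all_boot all_order all_algebra.
From mathcomp Require Import all_classical all_reals all_analysis.
Set Implicit Arguments. Unset Strict Implicit. Unset Printing Implicit Defensive.
Import Order.TTheory GRing.Theory Num.Theory.
Import numFieldNormedType.Exports.
Local Open Scope classical_set_scope.
Local Open Scope ring_scope.

Section QDefs.
Variable R : realType.

Definition qint (q : R) (n : nat) : R := (1 - q ^+ n) / (1 - q).
Definition qfact (q : R) (n : nat) : R := \prod_(i < n) qint q i.+1.
Definition qpoch (q : R) (k : nat) : R := \prod_(j < k) (1 - q ^+ j.+1).
Definition qpoch_inf (q : R) : R := lim (qpoch q @ \oo).

Definition bcoef (q : R) (n : nat) : R :=
  q ^+ n.+1 * qint q n.+1 + q ^+ n.-1 * qint q n.
(* note: for n = 0 the second term is q^{-1}[0]_q = 0; we use q^0 * [0]_q = 0 *)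
Definition lcoef (q : R) (n : nat) : R := q ^+ (2 * n).-1 * (qint q n) ^+ 2.
(* for n = 0, lambda_0 multiplies p_{-1} = 0, so its value is irrelevant *)

(* ppair n = (p_{n-1}, p_n) *)
Fixpoint ppair (q : R) (n : nat) : {poly R} * {poly R} :=
  match n with
  | 0 => (0, 1)
  | n'.+1 => let pr := ppair q n' in
      (pr.2, ('X - (bcoef q n')%:P) * pr.2 - (lcoef q n')%:P * pr.1)
  end.
Definition opoly (q : R) (n : nat) : {poly R} := (ppair q n).2.

(* The measure mu: for k >= 0 (k = i - 1), mass q^(k+1) (q;q)_oo/(q;q)_k
   at the point q^k/(1-q); and mass (1 - q) at 0. *)
Definition mu_mass (q : R) (k : nat) : R := q ^+ k.+1 * qpoch_inf q / qpoch q k.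
Definition mu_point (q : R) (k : nat) : R := q ^+ k / (1 - q).

Definition mu_partial (q : R) (f : R -> R) (N : nat) : R :=
  (1 - q) * f 0 + \sum_(k < N) mu_mass q k * f (mu_point q k).
Definition mu_abs_partial (q : R) (f : R -> R) (N : nat) : R :=
  `|1 - q| * `|f 0| + \sum_(k < N) `|mu_mass q k * f (mu_point q k)|.

Definition mu_integral_is (q : R) (f : R -> R) (v : R) : Prop :=
  cvg (mu_abs_partial q f @ \oo) /\ mu_partial q f @ \oo --> v.

End QDefs.

(* Main.v *)
Require Import Defs.
From mathcomp Require Import all_boot all_order all_algebra.
From mathcomp Require Import all_classical all_reals all_analysis.
From mathcomp Require Import ring lra zify.
Import Order.TTheory GRing.Theory Num.Theory.
Import numFieldNormedType.Exports.
Local Open Scope classical_set_scope.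
Local Open Scope ring_scope.

Section Alg.
Variable R : realType.
Variable q : R.
Hypothesis hq0 : 0 < q.
Hypothesis hq1 : q < 1.

Let q0 : q != 0. Proof. by rewrite gt_eqF. Qed.
Let q1 : 1 - q != 0. Proof. by rewrite subr_eq0 eq_sym lt_eqF. Qed.

Definition Lq (p : {poly R}) := \sum_(i < size p) p`_i * qfact q i.

Lemma Lq_widen (p : {poly R}) n : (size p <= n)%N -> \sum_(i < n) p`_i * qfact q i = Lq p.
Proof.
move=> H; rewrite /Lq (big_ord_widen n (fun i => p`_i * qfact q i) H).
rewrite [RHS]big_mkcond /=; apply: eq_bigr => i _; case: ifP => // /negbT.
by rewrite -leqNgt => h; rewrite nth_default // mul0r.
Qed.

Lemma LqD (p r : {poly R}) : Lq (p + r) = Lq p + Lq r.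
Proof.
set n := maxn (size p) (size r).
rewrite -(@Lq_widen p n) ?leq_maxl // -(@Lq_widen r n) ?leq_maxr //.
rewrite -(@Lq_widen (p + r) n) ?size_add // -big_split /=.
by apply: eq_bigr => i _; rewrite coefD mulrDl.
Qed.

Lemma LqZ c (p : {poly R}) : Lq (c *: p) = c * Lq p.
Proof.
rewrite -(@Lq_widen (c *: p) (size p)) ?size_scale_leq // /Lq mulr_sumr.
by apply: eq_bigr => i _; rewrite coefZ mulrA.
Qed.

Lemma LqB (p r : {poly R}) : Lq (p - r) = Lq p - Lq r.
Proof. by rewrite -scaleN1r LqD LqZ mulN1r. Qed.

Lemma LqXn i : Lq 'X^i = qfact q i.
Proof.
rewrite /Lq size_polyXn big_ord_recr /= coefXn eqxx mul1r big1 ?add0r //.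
by move=> j _; rewrite coefXn ltn_eqF // mul0r.
Qed.

Lemma Lq_sum m (F : 'I_m -> {poly R}) :
  Lq (\sum_(i < m) F i) = \sum_(i < m) Lq (F i).
Proof.
elim: m F => [|m IH] F; first by rewrite !big_ord0 /Lq size_poly0 big_ord0.
by rewrite !big_ord_recr /= LqD IH.
Qed.

Lemma qfactS k : qfact q k.+1 = qfact q k * qint q k.+1.
Proof. by rewrite /qfact big_ord_recr. Qed.

Lemma qpochS k : qpoch q k.+1 = qpoch q k * (1 - q ^+ k.+1).
Proof. by rewrite /qpoch big_ord_recr. Qed.

Lemma opoly1 : opoly q 1 = 'X - (bcoef q 0)%:P.
Proof. by rewrite /opoly /= mulr1 mulr0 subr0. Qed.

Lemma opolySS n : opoly q n.+2 =
  ('X - (bcoef q n.+1)%:P) * opoly q n.+1 - (lcoef q n.+1)%:P * opoly q n.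
Proof. by []. Qed.

Fixpoint Cn n := match n with 0 => 1 | m.+1 => Cn m * (- q ^+ m.+1 / (1 - q)) end.
Definition rr n := (1 - (1 - q) * q ^+ n) / q.
Definition G n k := match n with
  | 0 => qfact q k
  | m.+1 => qfact q k * Cn m.+1 * (q ^+ k - rr m.+1) *
            \prod_(j < m) (q ^+ k - q ^+ j.+1) end.

Lemma bcoef0 : bcoef q 0 = q.
Proof. by rewrite /bcoef /qint !expr0 expr1 subrr mul0r mulr0 addr0 divff // mulr1. Qed.

Lemma prod_shift m (Q : R) :
  \prod_(j < m.+1) (q * Q - q ^+ j.+1) =
  q ^+ m.+1 * ((Q - 1) * \prod_(j < m) (Q - q ^+ j.+1)).
Proof.
rewrite (eq_bigr (fun j : 'I_m.+1 => q * (Q - q ^+ j))); last first.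
  by move=> j _; rewrite exprS mulrBr.
rewrite big_split /= prodr_const card_ord; congr (_ * _).
by rewrite big_ord_recl /= expr0.
Qed.

Lemma Grec n k :
  G n.+2 k = G n.+1 k.+1 - bcoef q n.+1 * G n.+1 k - lcoef q n.+1 * G n k.
Proof.
case: n => [|m].
  rewrite /G /= !big_ord1 big_ord0 qfactS /bcoef /lcoef /rr /qint /=.
  rewrite !big_ord0 !exprS !expr0 !mulr1.
  set Q := q ^+ k; set F := qfact q k.
  field; by rewrite ?q1 ?q0.
rewrite /G -/(G m.+1 k) /=.
rewrite [q ^+ k.+1]exprS prod_shift !big_ord_recr /= !qfactS.
rewrite /bcoef /lcoef /rr /qint.
have -> : (2 * m.+2).-1 = (m.+2 + m.+1)%N by lia.
rewrite exprD !exprS expr0 mulr1.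
set P := \prod_(i < m) _.
move: P (Cn m) (q ^+ k) (qfact q k) (q ^+ m) => P C Q F s.
field; by rewrite ?q1 ?q0.
Qed.

Lemma Xk_opolySS n k : 'X^k * opoly q n.+2 = 'X^(k.+1) * opoly q (n.+1)
  - bcoef q (n.+1) *: ('X^k * opoly q (n.+1)) - lcoef q (n.+1) *: ('X^k * opoly q n).
Proof. by rewrite opolySS -!mul_polyC exprS; ring. Qed.

Lemma opoly0 : opoly q 0 = 1. Proof. by []. Qed.

Lemma GX n k : Lq ('X^k * opoly q n) = G n k.
Proof.
suff: forall n, (forall k, Lq ('X^k * opoly q n) = G n k) /\
                (forall k, Lq ('X^k * opoly q n.+1) = G n.+1 k) by case/(_ n).
elim=> [|{}n [IH1 IH2]]; split => // {}k.
- by rewrite opoly0 mulr1 LqXn.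
- rewrite opoly1 mulrBr -exprSr [_ * _%:P]mulrC mul_polyC LqB LqZ !LqXn bcoef0.
  rewrite /G /= big_ord0 qfactS /rr /qint expr1 mulr1 exprS.
  move: (q ^+ k) (qfact q k) => Q F.
  field; by rewrite ?q1 ?q0.
- by rewrite Xk_opolySS !LqB !LqZ !IH2 IH1 Grec.
Qed.

Lemma opoly_at0 n : (opoly q n).[0] = Cn n * qpoch q n.
Proof.
suff: forall n, (opoly q n).[0] = Cn n * qpoch q n /\
                (opoly q n.+1).[0] = Cn n.+1 * qpoch q n.+1 by case/(_ n).
elim=> [|{}n [IH1 IH2]]; split => //.
- by rewrite opoly0 hornerC /qpoch big_ord0 mulr1.
- rewrite opoly1 !hornerE bcoef0 /= /qpoch big_ord1 expr1.
  field; by rewrite ?q1 ?q0.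
- rewrite opolySS hornerD hornerN !hornerM hornerXsubC !hornerC IH1 IH2 /= !qpochS /bcoef /lcoef /qint.
  have -> : (2 * n.+1).-1 = (n.+1 + n)%N by lia.
  rewrite exprD !exprS /=.
  move: (Cn n) (qpoch q n) (q ^+ n) => C P s.
  field; by rewrite ?q1 ?q0.
Qed.

Lemma size_opoly n : (size (opoly q n) <= n.+1)%N.
Proof.
suff: forall n, (size (opoly q n) <= n.+1)%N /\ (size (opoly q n.+1) <= n.+2)%N
  by case/(_ n).
elim=> [|{}n [IH1 IH2]]; split => //.
- by rewrite opoly0 size_poly1.
- by rewrite opoly1 size_XsubC.
- rewrite opolySS; apply: (leq_trans (size_add _ _)).
  rewrite geq_max; apply/andP; split.
    apply: (leq_trans (size_mul_leq _ _)); rewrite size_XsubC.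
    by rewrite add2n /=.
  rewrite size_opp; apply: (leq_trans (size_mul_leq _ _)).
  have ha := size_polyC_leq1 (lcoef q n.+1).
  rewrite -subn1 leq_subLR; apply: leq_trans (leq_add ha IH1) _.
  by rewrite add1n ltnS; apply: leq_trans (leqnSn _) (leqnSn _).
Qed.

Lemma sum_widen (p : {poly R}) (f : nat -> R) N : (size p <= N)%N ->
  \sum_(i < N) p`_i * f i = \sum_(i < size p) p`_i * f i.
Proof.
move=> H; rewrite (big_ord_widen N (fun i => p`_i * f i) H).
rewrite [RHS]big_mkcond /=; apply: eq_bigr => i _; case: ifP => // /negbT.
by rewrite -leqNgt => h; rewrite nth_default // mul0r.
Qed.

Lemma G_vanish n i : (i < n)%N -> G n.+1 i.+1 = 0.
Proof.
by move=> H; rewrite /G (bigD1 (Ordinal H)) //= subrr mul0r mulr0.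
Qed.

Lemma orth m n : (m < n)%N ->
  (1 - q) * (opoly q m * opoly q n).[0] + q * Lq (opoly q m * opoly q n) = 0.
Proof.
case: n => [//|n] lt.
have E : opoly q m = \sum_(i < size (opoly q m)) (opoly q m)`_i *: 'X^i.
  by rewrite -poly_def coefK.
rewrite hornerM horner_coef0 {2}E mulr_suml Lq_sum.
rewrite (eq_bigr (fun i : 'I_ _ => (opoly q m)`_i * G n.+1 i)); last first.
  by move=> i _; rewrite -scalerAl LqZ GX.
rewrite -(@sum_widen _ (G n.+1) n.+1); last by apply: (leq_trans (size_opoly m)).
rewrite big_ord_recl big1 ?addr0; last by move=> i _; rewrite lift0 G_vanish ?mulr0.
rewrite opoly_at0 qpochS /G /=.
have -> : \prod_(j < n) (q ^+ 0 - q ^+ j.+1) = qpoch q n by rewrite /qpoch expr0.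
rewrite /qfact big_ord0 /rr expr0.
move: (Cn n) (qpoch q n) (q ^+ n) ((opoly q m)`_0) => C P s a.
rewrite exprS.
field; by rewrite ?q1 ?q0.
Qed.

Let q1p : 0 < 1 - q. Proof. by rewrite subr_gt0. Qed.

Lemma qX_lt1 k : q ^+ k.+1 < 1.
Proof. by rewrite exprn_ilt1 // ltW. Qed.

Lemma qX_ge0 k : 0 <= q ^+ k.
Proof. by rewrite exprn_ge0 // ltW. Qed.

Lemma P_gt0 k : 0 < qpoch q k.
Proof.
elim: k => [|k IH]; first by rewrite /qpoch big_ord0 ltr01.
by rewrite qpochS mulr_gt0 // subr_gt0 qX_lt1.
Qed.

Lemma P_neq0 k : qpoch q k != 0.
Proof. by rewrite gt_eqF // P_gt0. Qed.

Lemma P_decr k : qpoch q k.+1 <= qpoch q k.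
Proof.
by rewrite qpochS ler_piMr ?(ltW (P_gt0 k)) // lerBlDr lerDl qX_ge0.
Qed.

Lemma P_le1 k : qpoch q k <= 1.
Proof.
elim: k => [|k IH]; first by rewrite /qpoch big_ord0.
exact: le_trans (P_decr k) IH.
Qed.

Lemma P_noninc : nonincreasing_seq (qpoch q).
Proof. by apply/nonincreasing_seqP => n; apply: P_decr. Qed.

Lemma P_shift J d : qpoch q (J + d) =
  qpoch q J * \prod_(i < d) (1 - q ^+ J.+1 * q ^+ i).
Proof.
elim: d => [|d IH]; first by rewrite addn0 big_ord0 mulr1.
by rewrite addnS qpochS IH big_ord_recr /= mulrA -exprD addSn.
Qed.

Lemma weier a d : 0 <= a -> a <= 1 ->
  [/\ 0 <= \prod_(i < d) (1 - a * q ^+ i), \prod_(i < d) (1 - a * q ^+ i) <= 1 &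
   (1 - q) - a * (1 - q ^+ d) <= (1 - q) * \prod_(i < d) (1 - a * q ^+ i)].
Proof.
move=> a0 a1; elim: d => [|d [h0 h1 h2]].
  rewrite big_ord0 expr0 subrr mulr0 subr0 mulr1; split => //; exact: ler01.
rewrite big_ord_recr /=.
move: h0 h1 h2; set x := \prod_(i < d) _ => h0 h1 h2.
have e0 := qX_ge0 d.
have e1 : q ^+ d <= 1 by rewrite exprn_ile1 // ltW.
have f0 : 0 <= a * q ^+ d by rewrite mulr_ge0.
have f1 : a * q ^+ d <= 1 by rewrite mulr_ile1.
have g : 0 <= (1 - q) * (1 - x) * (a * q ^+ d).
  by rewrite !mulr_ge0 // ?subr_ge0 // ltW.
rewrite exprS; split.
- by rewrite mulr_ge0 // subr_ge0.
- by rewrite mulr_ile1 // ?subr_ge0 // lerBlDr lerDl.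
- move: g h2; move: (q ^+ d) => z.
  move=> g h2. nra.
Qed.

Lemma P_lb : exists2 c, 0 < c & forall k, c <= qpoch q k.
Proof.
have hq : `|q| < 1 by rewrite ger0_norm // ltW.
have hz : 0 < (1 - q) / 2 by rewrite divr_gt0.
have := cvgr_lt _ (cvg_expr hq) _ hz.
case => J _ HJ.
have hJ : q ^+ J < (1 - q) / 2 by apply: (HJ J) => /=.
have ha : q ^+ J.+1 <= q ^+ J by rewrite exprS ler_piMl ?qX_ge0 // ltW.
have PJ := P_gt0 J.
exists (qpoch q J / 2); first by rewrite divr_gt0.
move=> k; case: (leqP J k) => Jk; last first.
  have : qpoch q k >= qpoch q J by apply: P_noninc; apply: ltnW.
  lra.
rewrite -(subnKC Jk) P_shift.
set d := (k - J)%N.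
have a0 := qX_ge0 J.+1.
have a1 : q ^+ J.+1 <= 1 by apply/ltW/qX_lt1.
case: (@weier _ d a0 a1) => h0 h1 h2.
move: h0 h1 h2; set Pi := \prod_(i < d) _ => h0 h1 h2.
have e0 : 0 <= q ^+ J.+1 * q ^+ d by rewrite mulr_ge0 // qX_ge0.
have h3 : (1 - q) / 2 <= (1 - q) * Pi by lra.
have h4 : 1 / 2 <= Pi.
  by rewrite -(ler_pM2l q1p) mulrA mulr1.
have : qpoch q J * (1 / 2) <= qpoch q J * Pi by rewrite ler_pM2l.
lra.
Qed.

Lemma P_is_cvg : cvgn (qpoch q).
Proof.
apply: nonincreasing_is_cvgn; first exact: P_noninc.
by exists 0 => _ [n _ <-]; exact: ltW (P_gt0 n).
Qed.

Lemma P_cvg : qpoch q @ \oo --> qpoch_inf q.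
Proof. exact: P_is_cvg. Qed.

Lemma Pinf_gt0 : 0 < qpoch_inf q.
Proof.
case: P_lb => c c0 hc; apply: (lt_le_trans c0).
by apply: limr_ge; [exact: P_is_cvg | apply: nearW => n; exact: hc].
Qed.

Let Pinf0 : qpoch_inf q != 0. Proof. by rewrite gt_eqF // Pinf_gt0. Qed.

Definition U n N := \sum_(k < N) (q ^+ n.+1) ^+ k / qpoch q k.

Lemma U0S N : U 0 N.+1 = (qpoch q N)^-1.
Proof.
elim: N => [|N IH]; first by rewrite /U big_ord1 /qpoch big_ord0 expr0 invr1 mulr1.
rewrite /U big_ord_recr /= -/(U 0 N.+1) IH qpochS expr1.
have h : 1 - q ^+ N.+1 != 0 by rewrite subr_eq0 eq_sym lt_eqF // qX_lt1.
have := P_neq0 N; move: (qpoch q N) => P hP.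
rewrite exprS.
field; by rewrite -exprS hP h.
Qed.

Lemma USS n N : U n.+1 N.+1 = U n N.+1 - q ^+ n.+1 * U n N.
Proof.
rewrite /U !big_ord_recl mulr_sumr !expr0 -addrA; congr (_ + _).
rewrite -sumrB; apply: eq_bigr => i _; rewrite lift0 qpochS.
have h : 1 - q ^+ i.+1 != 0 by rewrite subr_eq0 eq_sym lt_eqF // qX_lt1.
have hP := P_neq0 i.
move: h hP; rewrite [q ^+ n.+2]exprS !exprS !exprMn.
move: (qpoch q i) (q ^+ n) (q ^+ i) => P s t h hP.
move: ((q * s) ^+ i) => u.
field; by rewrite h hP.
Qed.

Lemma U_cvg n : U n @ \oo --> qpoch q n / qpoch_inf q.
Proof.
elim: n => [|n IH].
  rewrite -cvg_shiftS.
  have -> : qpoch q 0 / qpoch_inf q = (qpoch_inf q)^-1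
    by rewrite /qpoch big_ord0 mul1r.
  have -> : [sequence U 0 n.+1]_n = (fun N => (qpoch q N)^-1)
    by apply/funext => N; rewrite /= U0S.
  exact: cvgV Pinf0 P_cvg.
rewrite -cvg_shiftS.
have -> : [sequence U n.+1 n0.+1]_n0 = (fun N => U n N.+1 - q ^+ n.+1 * U n N)
  by apply/funext => N; rewrite /= USS.
have -> : qpoch q n.+1 / qpoch_inf q =
    qpoch q n / qpoch_inf q - q ^+ n.+1 * (qpoch q n / qpoch_inf q).
  by rewrite qpochS; field.
apply: cvgB; last exact: cvgMl_tmp.
by rewrite (cvg_shiftS (fun N => U n N)).
Qed.

Definition nu (j N : nat) := \sum_(k < N) mu_mass q k * mu_point q k ^+ j.

Lemma qfactE j : qfact q j = qpoch q j / (1 - q) ^+ j.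
Proof.
elim: j => [|j IH]; first by rewrite /qfact /qpoch !big_ord0 expr0 divr1.
rewrite qfactS qpochS IH /qint [(1 - q) ^+ j.+1]exprSr.
have h : (1 - q) ^+ j != 0 by rewrite expf_neq0.
move: h; move: ((1 - q) ^+ j) (qpoch q j) => c P h.
field; by rewrite h q1.
Qed.

Lemma nuE j N : nu j N = q * qpoch_inf q / (1 - q) ^+ j * U j N.
Proof.
rewrite /nu /U mulr_sumr; apply: eq_bigr => k _.
rewrite /mu_mass /mu_point expr_div_n exprAC !exprS.
have h : (1 - q) ^+ j != 0 by rewrite expf_neq0.
have hP := P_neq0 k.
move: h hP; move: ((1 - q) ^+ j) (qpoch q k) ((q ^+ k) ^+ j) (q ^+ k) => c P a b h hP.
field; by rewrite h hP.
Qed.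

Lemma nu_cvg j : nu j @ \oo --> q * qfact q j.
Proof.
have -> : nu j = (fun N => q * qpoch_inf q / (1 - q) ^+ j * U j N)
  by apply/funext => N; rewrite nuE.
have -> : q * qfact q j = q * qpoch_inf q / (1 - q) ^+ j * (qpoch q j / qpoch_inf q).
  rewrite qfactE.
  have h : (1 - q) ^+ j != 0 by rewrite expf_neq0.
  move: h; move: ((1 - q) ^+ j) (qpoch q j) => c P h.
  field; by rewrite h Pinf0.
exact: cvgMl_tmp (U_cvg j).
Qed.

Lemma mass_ge0 k : 0 <= mu_mass q k.
Proof.
by rewrite /mu_mass mulr_ge0 ?invr_ge0 ?mulr_ge0 ?qX_ge0 ?(ltW Pinf_gt0) ?(ltW (P_gt0 k)).
Qed.

Lemma point_ge0 k : 0 <= mu_point q k.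
Proof. by rewrite /mu_point mulr_ge0 ?invr_ge0 ?qX_ge0 ?(ltW q1p). Qed.

Lemma nu_nondec j : nondecreasing_seq (nu j).
Proof.
apply/nondecreasing_seqP => N; rewrite /nu big_ord_recr /= lerDl.
by rewrite mulr_ge0 ?mass_ge0 ?exprn_ge0 ?point_ge0.
Qed.

Lemma nu_le j N : nu j N <= q * qfact q j.
Proof.
rewrite -(cvg_lim _ (nu_cvg j)) //.
apply: nondecreasing_cvgn_le; first exact: nu_nondec.
exact: cvgP (nu_cvg j).
Qed.

Definition nup (p : {poly R}) N := \sum_(k < N) mu_mass q k * p.[mu_point q k].

Lemma nupE p N : nup p N = \sum_(i < size p) p`_i * nu i N.
Proof.
rewrite /nup /nu.
under eq_bigr do rewrite horner_coef mulr_sumr.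
rewrite exchange_big /=; apply: eq_bigr => i _; rewrite mulr_sumr.
by apply: eq_bigr => k _; rewrite mulrCA.
Qed.

Lemma cvg_sum_ord m (f : 'I_m -> nat -> R) (a : 'I_m -> R) :
  (forall i, f i @ \oo --> a i) ->
  (fun N => \sum_(i < m) f i N) @ \oo --> \sum_(i < m) a i.
Proof.
elim: m f a => [|m IH] f a H.
  rewrite big_ord0.
  have -> : (fun N => \sum_(i < 0) f i N) = (fun=> 0)
    by apply/funext => N; rewrite big_ord0.
  exact: cvg_cst.
rewrite big_ord_recr.
have -> : (fun N => \sum_(i < m.+1) f i N) =
  (fun N => \sum_(i < m) f (widen_ord (leqnSn m) i) N + f ord_max N)
  by apply/funext => N; rewrite big_ord_recr.
apply: cvgD; [exact: IH | exact: H].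
Qed.

Lemma nup_cvg p : nup p @ \oo --> q * Lq p.
Proof.
have -> : nup p = (fun N => \sum_(i < size p) p`_i * nu i N)
  by apply/funext => N; rewrite nupE.
rewrite /Lq mulr_sumr; apply: cvg_sum_ord => i.
rewrite mulrCA; exact: cvgMl_tmp (nu_cvg i).
Qed.

Lemma mu_poly p :
  mu_integral_is q (fun x => p.[x]) ((1 - q) * p.[0] + q * Lq p).
Proof.
split.
  apply: nondecreasing_is_cvgn.
    apply/nondecreasing_seqP => N; rewrite /mu_abs_partial big_ord_recr /=.
    by rewrite addrA lerDl normr_ge0.
  exists (`|1 - q| * `|p.[0]| + \sum_(i < size p) `|p`_i| * (q * qfact q i)).
  move=> _ [N _ <-]; rewrite /mu_abs_partial lerD2l.
  apply: (@le_trans _ _ (\sum_(k < N) \sum_(i < size p)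
       `|p`_i| * (mu_mass q k * mu_point q k ^+ i))).
    apply: ler_sum => k _.
    rewrite normrM (ger0_norm (mass_ge0 k)) horner_coef.
    apply: (le_trans (ler_wpM2l (mass_ge0 k) (ler_norm_sum _ _ _))).
    rewrite mulr_sumr; apply: ler_sum => i _.
    rewrite normrM (ger0_norm (exprn_ge0 i (point_ge0 k))).
    by rewrite mulrCA.
  rewrite exchange_big /=; apply: ler_sum => i _.
  rewrite -mulr_sumr; apply: ler_wpM2l; first exact: normr_ge0.
  exact: nu_le.
have -> : mu_partial q (fun x => p.[x]) = (fun N => (1 - q) * p.[0] + nup p N)
  by apply/funext => N.
apply: cvgD; [exact: cvg_cst | exact: nup_cvg].
Qed.

End Alg.

Theorem proposition1 (R : realType) (q : R) (hq0 : 0 < q) (hq1 : q < 1) :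
  (forall m n : nat, m <> n ->
     mu_integral_is q (fun x => (opoly q m).[x] * (opoly q n).[x]) 0)
  /\ mu_integral_is q (fun x => x ^+ 0) 1
  /\ (forall n : nat, (1 <= n)%N ->
     mu_integral_is q (fun x => x ^+ n) (q * qfact q n)).
Proof.
split; [|split].
- move=> m n mn.
  have -> : (fun x => (opoly q m).[x] * (opoly q n).[x]) =
            (fun x => (opoly q m * opoly q n).[x])
    by apply/funext => x; rewrite hornerM.
  have := @mu_poly R q hq0 hq1 (opoly q m * opoly q n).
  case: (ltngtP m n) => h.
  + by rewrite (@orth R q hq0 hq1 _ _ h).
  + by rewrite [opoly q m * _]mulrC (@orth R q hq0 hq1 _ _ h).
  + by move: mn; rewrite h.
- have -> : (fun x : R => x ^+ 0) = (fun x => ('X^0 : {poly R}).[x])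
    by apply/funext => x; rewrite hornerXn.
  have := @mu_poly R q hq0 hq1 'X^0.
  by rewrite (@LqXn R q) hornerXn expr0 /qfact big_ord0 !mulr1 subrK.
- case=> [//|n] _.
  have -> : (fun x : R => x ^+ n.+1) = (fun x => ('X^(n.+1) : {poly R}).[x])
    by apply/funext => x; rewrite hornerXn.
  have := @mu_poly R q hq0 hq1 'X^(n.+1).
  by rewrite hornerXn expr0n /= mulr0 add0r (@LqXn R q).
Qed.
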